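(* If $K\subseteq\mathbb{R}^d$ is a pointwise Whitney regular compact set, then $(\mathcal{J}^1(K),\|\cdot\|_{\mathcal{J}^1(K)})$ is complete.
   Context: A continuous $df:K\to\mathbb{R}^d$ is a continuous derivative of $f:K\to\mathbb{R}$ on $K$ if $\lim_{y\to x,\,y\in K\setminus\{x\}}\frac{f(y)-f(x)-\langle df(x),y-x\rangle}{|y-x|}=0$ for all $x\in K$. The jet space is $\mathcal{J}^1(K)=\{(f,df): df \text{ is a continuous derivative of } f \text{ on } K\}$ (so $f$ is continuous) with norm $\|(f,df)\|_{\mathcal{J}^1(K)}=\|f\|_K+\|df\|_K$, $\|\cdot\|_K$ the sup norm on $K$. $K$ is pointwise Whitney regular if for every $x\in K$ there are a neighbourhood $V_x$ of $x$ and $C_x>0$ such that every $y\in V_x\cap K$ is joined to $x$ by a rectifiable path in $K$ of length at most $C_x|x-y|$ (a rectifiable path is a continuous map $\gamma:[a,b]\to K$ of finite length $\sup\sum_j|\gamma(t_j)-\gamma(t_{j-1})|$). *)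

(* Defs.v *)
From mathcomp Require Import ssreflect ssrfun ssrbool eqtype ssrnat seq fintype bigop.
From Stdlib Require Import Reals ClassicalEpsilon.
Set Implicit Arguments.
Unset Strict Implicit.
Local Open Scope R_scope.

Definition Vec (d : nat) := 'I_d -> R.

Definition vsub d (x y : Vec d) : Vec d := fun i => x i - y i.
Definition dot d (x y : Vec d) : R := \big[Rplus/0]_(i < d) (x i * y i).
Definition vnorm d (x : Vec d) : R := sqrt (dot x x).

Definition open_set d (U : Vec d -> Prop) : Prop :=
  forall x, U x -> exists r, 0 < r /\ forall y, vnorm (vsub y x) < r -> U y.

Definition compact_set d (K : Vec d -> Prop) : Prop :=
  forall (I : Type) (U : I -> Vec d -> Prop),
    (forall i, open_set (U i)) ->
    (forall x, K x -> exists i, U i x) ->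
    exists l : list I, forall x, K x -> exists i, List.In i l /\ U i x.

Definition cont_on d (K : Vec d -> Prop) (f : Vec d -> R) : Prop :=
  forall x, K x -> forall eps, 0 < eps -> exists delta, 0 < delta /\
    forall y, K y -> vnorm (vsub y x) < delta -> Rabs (f y - f x) < eps.

Definition vcont_on d (K : Vec d -> Prop) (g : Vec d -> Vec d) : Prop :=
  forall x, K x -> forall eps, 0 < eps -> exists delta, 0 < delta /\
    forall y, K y -> vnorm (vsub y x) < delta -> vnorm (vsub (g y) (g x)) < eps.

Definition is_cont_deriv d (K : Vec d -> Prop) (f : Vec d -> R) (df : Vec d -> Vec d) : Prop :=
  vcont_on K df /\
  forall x, K x -> forall eps, 0 < eps -> exists delta, 0 < delta /\
    forall y, K y -> y <> x -> vnorm (vsub y x) < delta ->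
      Rabs ((f y - f x - dot (df x) (vsub y x)) / vnorm (vsub y x)) < eps.

Definition in_J1 d (K : Vec d -> Prop) (f : Vec d -> R) (df : Vec d -> Vec d) : Prop :=
  cont_on K f /\ is_cont_deriv K f df.

(* ||g||_K = sup_{x in K} g x for a nonnegative quantity g (here |f| or |df|);
   defined as the least upper bound when it exists, 0 otherwise
   (it exists for the bounded functions considered, K nonempty). *)
Definition supK d (K : Vec d -> Prop) (g : Vec d -> R) : R :=
  match excluded_middle_informative
          (exists l, is_lub (fun r => exists x, K x /\ r = g x) l) with
  | left H => proj1_sig (constructive_indefinite_description _ H)
  | right _ => 0
  end.

Definition J1norm d (K : Vec d -> Prop) (f : Vec d -> R) (df : Vec d -> Vec d) : R :=
  supK K (fun x => Rabs (f x)) + supK K (fun x => vnorm (df x)).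

Definition J1dist d (K : Vec d -> Prop) (f1 : Vec d -> R) (df1 : Vec d -> Vec d)
  (f2 : Vec d -> R) (df2 : Vec d -> Vec d) : R :=
  J1norm K (fun x => f1 x - f2 x) (fun x => vsub (df1 x) (df2 x)).

Fixpoint poly_len d (gamma : R -> Vec d) (t : nat -> R) (n : nat) : R :=
  match n with
  | O => 0
  | S m => poly_len gamma t m + vnorm (vsub (gamma (t (S m))) (gamma (t m)))
  end.

Definition length_le d (gamma : R -> Vec d) (a b L : R) : Prop :=
  forall (t : nat -> R) (n : nat),
    t O = a -> t n = b -> (forall j, (j < n)%nat -> t j <= t (S j)) ->
    poly_len gamma t n <= L.

Definition path_in d (K : Vec d -> Prop) (gamma : R -> Vec d) (a b : R) : Prop :=
  a <= b /\
  (forall s, a <= s <= b -> K (gamma s)) /\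
  (forall s, a <= s <= b -> forall eps, 0 < eps -> exists delta, 0 < delta /\
     forall u, a <= u <= b -> Rabs (u - s) < delta -> vnorm (vsub (gamma u) (gamma s)) < eps).

(* pointwise Whitney regularity (neighbourhood V_x taken to contain an open ball
   B(x, r); shrinking V_x to that ball is harmless) *)
Definition pw_whitney_regular d (K : Vec d -> Prop) : Prop :=
  forall x, K x -> exists (V : Vec d -> Prop) (C : R),
    open_set V /\ V x /\ 0 < C /\
    forall y, V y -> K y ->
      exists (gamma : R -> Vec d) (a b : R),
        path_in K gamma a b /\ gamma a = x /\ gamma b = y /\
        length_le gamma a b (C * vnorm (vsub x y)).

(* Main.v *)
Require Import Defs.
From Stdlib Require Import Reals.
From mathcomp Require ssreflect ssrfun ssrbool eqtype ssrnat seq fintype bigop.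
From Stdlib Require Import Lra Psatz Classical ClassicalEpsilon FunctionalExtensionality.
Local Open Scope R_scope.

Module Aux.
Import ssreflect ssrfun ssrbool eqtype ssrnat seq fintype bigop.
Local Open Scope R_scope.
Set Implicit Arguments.
Unset Strict Implicit.

Lemma sum3 (T : Type) (r : seq T) (a b c : R) (f g h : T -> R) :
  \big[Rplus/0]_(i <- r) (a * f i + b * g i + c * h i) =
  a * \big[Rplus/0]_(i <- r) f i + b * \big[Rplus/0]_(i <- r) g i + c * \big[Rplus/0]_(i <- r) h i.
Proof. elim: r => [|i r IH]; rewrite ?big_nil ?big_cons ?IH; ring. Qed.

Lemma sum3o (n : nat) (a b c : R) (f g h : 'I_n -> R) :
  \big[Rplus/0]_(i < n) (a * f i + b * g i + c * h i) =
  a * \big[Rplus/0]_(i < n) f i + b * \big[Rplus/0]_(i < n) g i + c * \big[Rplus/0]_(i < n) h i.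
Proof. exact: sum3. Qed.

Lemma sum_ge0 (T : Type) (r : seq T) (f : T -> R) :
  (forall i, 0 <= f i) -> 0 <= \big[Rplus/0]_(i <- r) f i.
Proof. move=> H; elim: r => [|i r IH]; rewrite ?big_nil ?big_cons; [lra|]. have := H i; lra. Qed.

Lemma sum_ge_term (T : eqType) (r : seq T) (f : T -> R) j :
  (forall i, 0 <= f i) -> j \in r -> f j <= \big[Rplus/0]_(i <- r) f i.
Proof.
move=> H; elim: r => [|i r IH] //; rewrite big_cons in_cons => /orP [/eqP ->|Hj].
- have := @sum_ge0 _ r f H; lra.
- have := IH Hj; have := H i; lra.
Qed.

Lemma sum_cv (T : Type) (r : seq T) (u : nat -> T -> R) (l : T -> R) :
  (forall i, Un_cv (fun m => u m i) (l i)) ->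
  Un_cv (fun m => \big[Rplus/0]_(i <- r) u m i) (\big[Rplus/0]_(i <- r) l i).
Proof.
move=> H; elim: r => [|i r IH].
- rewrite big_nil => e He; exists 0%nat => n _; rewrite big_nil /Rdist; rewrite Rminus_diag Rabs_R0; lra.
- rewrite big_cons.
  have := CV_plus _ _ _ _ (H i) IH.
  move=> Hc e He; case: (Hc e He) => N HN; exists N => n Hn.
  rewrite big_cons; exact: HN.
Qed.

Definition vadd d (x y : Vec d) : Vec d := fun i => x i + y i.

Lemma dot_ge0 d (x : Vec d) : 0 <= dot x x.
Proof. apply: sum_ge0 => i; apply: Rle_0_sqr. Qed.

Lemma dot_comm d (x y : Vec d) : dot x y = dot y x.
Proof. rewrite /dot; apply: eq_bigr => i _; ring. Qed.

Lemma dot_quad d (x y : Vec d) (t : R) :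
  dot (fun i => x i - t * y i) (fun i => x i - t * y i) =
  dot x x - 2 * t * dot x y + t * t * dot y y.
Proof.
rewrite /dot.
have -> : \big[Rplus/0]_(i < d) ((x i - t * y i) * (x i - t * y i)) =
  \big[Rplus/0]_(i < d) (1 * (x i * x i) + (- 2 * t) * (x i * y i) + (t * t) * (y i * y i)).
  by apply: eq_bigr => i _; ring.
rewrite sum3o; ring.
Qed.

Lemma cauchy_schwarz d (x y : Vec d) : Rabs (dot x y) <= vnorm x * vnorm y.
Proof.
have Hq := fun t => dot_ge0 (fun i => x i - t * y i).
have HA := dot_ge0 x; have HC := dot_ge0 y.
set A := dot x x in Hq HA *; set B := dot x y in Hq *; set C := dot y y in Hq HC *.
have Hq' : forall t, 0 <= A - 2 * t * B + t * t * C.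
  by move=> t; rewrite -dot_quad; apply: Hq.
have HB2 : B * B <= A * C.
  case: (Req_dec C 0) => HC0.
  - case: (Req_dec B 0) => HB0.
    + rewrite HB0 HC0; lra.
    + have := Hq' ((A + 1) / (2 * B)). rewrite HC0.
      have -> : 2 * ((A + 1) / (2 * B)) * B = A + 1 by field.
      lra.
  - have := Hq' (B / C).
    have -> : A - 2 * (B / C) * B + B / C * (B / C) * C = (A * C - B * B) / C by field.
    move=> H.
    have HCp : 0 < C by lra.
    have := Rmult_le_compat_r C _ _ (Rlt_le _ _ HCp) H.
    have -> : (A * C - B * B) / C * C = A * C - B * B by field.
    lra.
rewrite /vnorm -sqrt_mult //.
rewrite -sqrt_Rsqr_abs; apply: sqrt_le_1_alt. rewrite /Rsqr; exact: HB2.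
Qed.

Lemma vnorm_ge0 d (x : Vec d) : 0 <= vnorm x.
Proof. exact: sqrt_pos. Qed.

Lemma vnorm_sq d (x : Vec d) : vnorm x * vnorm x = dot x x.
Proof. apply: sqrt_sqrt; apply: dot_ge0. Qed.

Lemma vnorm_add d (x y : Vec d) : vnorm (vadd x y) <= vnorm x + vnorm y.
Proof.
have E : dot (vadd x y) (vadd x y) = dot x x + 2 * dot x y + dot y y.
  rewrite /dot -[in RHS](Rmult_1_l (\big[Rplus/0]_(i < d) (x i * x i))) -[in RHS](Rmult_1_l (\big[Rplus/0]_(i < d) (y i * y i))).
  rewrite -sum3o; apply: eq_bigr => i _; rewrite /vadd; ring.
have CS := cauchy_schwarz x y.
have := Rle_abs (dot x y).
have hx := vnorm_ge0 x; have hy := vnorm_ge0 y.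
have hxx := vnorm_sq x; have hyy := vnorm_sq y.
have hs := vnorm_sq (vadd x y); have hs0 := vnorm_ge0 (vadd x y).
move=> Ha.
apply: Rsqr_incr_0_var; rewrite /Rsqr; nra.
Qed.

Lemma vsub_split d (x y z : Vec d) : vsub x z = vadd (vsub x y) (vsub y z).
Proof. apply: functional_extensionality => i; rewrite /vadd /vsub; ring. Qed.

Lemma vnorm_tri d (x y z : Vec d) : vnorm (vsub x z) <= vnorm (vsub x y) + vnorm (vsub y z).
Proof. rewrite (vsub_split x y z); apply: vnorm_add. Qed.

Lemma vnorm_sym d (x y : Vec d) : vnorm (vsub x y) = vnorm (vsub y x).
Proof. rewrite /vnorm /dot; congr sqrt; apply: eq_bigr => i _; rewrite /vsub; ring. Qed.

Lemma vnorm_self d (x : Vec d) : vnorm (vsub x x) = 0.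
Proof.
rewrite /vnorm /dot.
have -> : \big[Rplus/0]_(i < d) (vsub x x i * vsub x x i) = 0 * \big[Rplus/0]_(i < d) (x i) + 0 * \big[Rplus/0]_(i < d) (x i) + 0 * \big[Rplus/0]_(i < d) (x i).
  rewrite -sum3o; apply: eq_bigr => i _; rewrite /vsub; ring.
rewrite !Rmult_0_l !Rplus_0_r; exact: sqrt_0.
Qed.

Lemma comp_le d (x : Vec d) i : Rabs (x i) <= vnorm x.
Proof.
rewrite /vnorm -sqrt_Rsqr_abs; apply: sqrt_le_1_alt.
rewrite /Rsqr; apply: (sum_ge_term (f := fun i => x i * x i)).
  move=> j; apply: Rle_0_sqr.
exact: mem_index_enum.
Qed.

Lemma vnorm_eq0 d (x y : Vec d) : vnorm (vsub x y) = 0 -> x = y.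
Proof.
move=> H; apply: functional_extensionality => i.
have := comp_le (vsub x y) i; rewrite H /vsub => H2.
have := Rabs_pos (x i - y i). 
move=> H3; have H4 : Rabs (x i - y i) = 0 by lra.
case: (Req_dec (x i - y i) 0) => Hz; first lra. have := Rabs_no_R0 _ Hz; lra.
Qed.

Lemma dot_sub_l d (x y z : Vec d) : dot (vsub x y) z = dot x z - dot y z.
Proof.
rewrite /dot.
have -> : \big[Rplus/0]_(i < d) (vsub x y i * z i) = 1 * \big[Rplus/0]_(i < d) (x i * z i) + (-1) * \big[Rplus/0]_(i < d) (y i * z i) + 0 * \big[Rplus/0]_(i < d) (y i * z i).
  rewrite -sum3o; apply: eq_bigr => i _; rewrite /vsub; ring.
ring.
Qed.

End Aux.

Module Aux2.
Import ssreflect ssrfun ssrbool eqtype ssrnat seq fintype bigop.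
Import Aux.
Local Open Scope R_scope.
Set Implicit Arguments.
Unset Strict Implicit.

Lemma supK_le d (K : Vec d -> Prop) g B : 0 <= B -> (forall x, K x -> g x <= B) -> supK K g <= B.
Proof.
move=> HB H; rewrite /supK; case: excluded_middle_informative => [E|_]; last lra.
case: constructive_indefinite_description => l [Hub Hl] /=.
apply: Hl => r [x [Kx ->]]; auto.
Qed.

Lemma supK_ge d (K : Vec d -> Prop) g x :
  (exists B, forall y, K y -> g y <= B) -> K x -> g x <= supK K g.
Proof.
move=> [B HB] Kx; rewrite /supK; case: excluded_middle_informative => [E|Hn].
- case: constructive_indefinite_description => l [Hub Hl] /=; apply: Hub; exists x; auto.
- exfalso; apply: Hn.
  have Hb : bound (fun r => exists x, K x /\ r = g x).
    by exists B => r [y [Ky ->]]; auto.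
  have [m Hm] := @completeness _ Hb (ex_intro _ (g x) (ex_intro _ x (conj Kx erefl))).
  by exists m.
Qed.

Lemma supK_ge0 d (K : Vec d -> Prop) g : (forall x, K x -> 0 <= g x) -> 0 <= supK K g.
Proof.
move=> H; rewrite /supK; case: excluded_middle_informative => [E|_]; last lra.
case: constructive_indefinite_description => l [Hub Hl] /=.
case: (classic (exists x, K x)) => [[x Kx]|Hn].
- have := Hub (g x) (ex_intro _ x (conj Kx erefl)); have := H x Kx; lra.
- have : l <= l - 1.
    apply: Hl => r [x [Kx _]]; exfalso; apply: Hn; by exists x.
  lra.
Qed.

Lemma fold_max_ge (T : Type) (h : T -> R) (l : list T) x :
  List.In x l -> h x <= List.fold_right (fun y acc => Rmax (h y) acc) 0 l.
Proof.
elim: l => [|y l IH] //= [->|Hin]; first exact: Rmax_l.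
apply: Rle_trans (IH Hin) _; exact: Rmax_r.
Qed.

Lemma cont_bounded d (K : Vec d -> Prop) g :
  compact_set K -> cont_on K g -> exists B, forall x, K x -> Rabs (g x) <= B.
Proof.
move=> HK Hg.
pose U (x : Vec d) (y : Vec d) := K x /\ exists del, 0 < del /\
   (forall z, K z -> vnorm (vsub z x) < del -> Rabs (g z - g x) < 1) /\ vnorm (vsub y x) < del.
have Hop : forall x, Defs.open_set (U x).
  move=> x y [Kx [del [Hd [Hz Hy]]]]; exists (del - vnorm (vsub y x)); split; first lra.
  move=> z Hzy; split=> //; exists del; do 2 split=> //.
  have := vnorm_tri z y x; lra.
have Hcov : forall x, K x -> exists i, U i x.
  move=> x Kx; exists x; split=> //.
  have [del [Hd Hdel]] := Hg x Kx 1 Rlt_0_1.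
  exists del; do 2 split=> //; rewrite vnorm_self; lra.
have [l Hl] := HK _ U Hop Hcov.
- exists (List.fold_right (fun y acc => Rmax (Rabs (g y) + 1) acc) 0 l) => y Ky.
  have [i [Hin [Ki [del [_ [Hz Hy]]]]]] := Hl y Ky.
  have := Hz y Ky Hy.
  have := fold_max_ge (fun y => Rabs (g y) + 1) Hin => /= H1 H2.
  apply: Rle_trans H1.
  have := Rabs_triang (g y - g i) (g i).
  have -> : g y - g i + g i = g y by ring.
  lra.
Qed.

Lemma lim_le u l N B : Un_cv u l -> (forall n, (N <= n)%coq_nat -> Rabs (u n) <= B) -> Rabs l <= B.
Proof.
move=> Hu HB; apply: Rnot_lt_le => Hl.
have [N' HN'] := Hu (Rabs l - B) ltac:(lra).
have H1 := HN' (Nat.max N N') (Nat.le_max_r _ _).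
have H2 := HB (Nat.max N N') (Nat.le_max_l _ _).
move: H1; rewrite /Rdist; move: H2.
set un := u _. split_Rabs; lra.
Qed.

Lemma cv_const (c : R) : Un_cv (fun _ => c) c.
Proof. move=> e He; exists 0%nat => n _; rewrite /Rdist Rminus_diag Rabs_R0; lra. Qed.

Lemma vlim_le d (u : nat -> Vec d) (l w : Vec d) N e :
  (forall i, Un_cv (fun m => u m i) (l i)) ->
  (forall m, (N <= m)%coq_nat -> vnorm (vsub w (u m)) <= e) -> vnorm (vsub w l) <= e.
Proof.
move=> Hu He.
have He0 : 0 <= e by have := He N (Nat.le_refl _); have := vnorm_ge0 (vsub w (u N)); lra.
have Hc : Un_cv (fun m => dot (vsub w (u m)) (vsub w (u m))) (dot (vsub w l) (vsub w l)).
  rewrite /dot.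
  apply: (@sum_cv _ _ (fun m i => vsub w (u m) i * vsub w (u m) i)) => i.
  rewrite /vsub; apply: CV_mult; apply: CV_minus => //; apply: cv_const.
have : Rabs (dot (vsub w l) (vsub w l)) <= e * e.
  apply: (lim_le Hc (N := N)) => m Hm.
  rewrite Rabs_pos_eq; last exact: dot_ge0.
  rewrite -vnorm_sq; have := He m Hm; have := vnorm_ge0 (vsub w (u m)); nra.
rewrite Rabs_pos_eq; last exact: dot_ge0.
rewrite -vnorm_sq => H.
have := vnorm_ge0 (vsub w l); nra.
Qed.

End Aux2.

Module Aux3.
Import ssreflect ssrfun ssrbool eqtype ssrnat seq fintype bigop.
Import Aux Aux2.
Local Open Scope R_scope.
Set Implicit Arguments.
Unset Strict Implicit.

Lemma poly_len_ext d (gam : R -> Vec d) t t' k :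
  (forall j, (j <= k)%nat -> t j = t' j) -> poly_len gam t k = poly_len gam t' k.
Proof.
elim: k => [|k IH] H //=.
rewrite IH; last by move=> j Hj; apply: H; apply: leqW.
by rewrite !H.
Qed.

Section MVI.
Variables (d : nat) (K : Vec d -> Prop) (g : Vec d -> R) (M : R) (gam : R -> Vec d) (a b e : R).

Definition PP (s : R) := exists (t : nat -> R) (k : nat), t O = a /\ t k = s /\
  (forall j, (j < k)%nat -> t j <= t (S j)) /\
  Rabs (g (gam s) - g (gam a)) <= (M + e) * poly_len gam t k.

Lemma PP_ext u v : PP u -> u <= v ->
  Rabs (g (gam v) - g (gam u)) <= (M + e) * vnorm (vsub (gam v) (gam u)) -> PP v.
Proof.
move=> [t [k [H0 [Hk [Hm Hb]]]]] Huv Hloc.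
exists (fun j => if (j <= k)%nat then t j else v), k.+1.
split; first by rewrite /= H0.
split; first by rewrite ltnn.
split.
- move=> j Hj; case: (ltngtP j k) => Hjk.
  + exact: Hm.
  + by exfalso; move: Hj; rewrite ltnS leqNgt Hjk.
  + by rewrite Hjk Hk.
- rewrite /= leqnn ltnn.
  rewrite -(@poly_len_ext _ gam t); last by move=> j ->.
  rewrite Hk.
  have := Rabs_triang (g (gam v) - g (gam u)) (g (gam u) - g (gam a)).
  have -> : g (gam v) - g (gam u) + (g (gam u) - g (gam a)) = g (gam v) - g (gam a) by ring.
  lra.
Qed.
End MVI.

Lemma mvi d (K : Vec d -> Prop) (g : Vec d -> R) (M : R) (gam : R -> Vec d) a b L :
 0 <= M ->
 (forall x, K x -> forall e, 0 < e -> exists del, 0 < del /\ forall z, K z ->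
     vnorm (vsub z x) < del -> Rabs (g z - g x) <= (M + e) * vnorm (vsub z x)) ->
 path_in K gam a b -> length_le gam a b L ->
 Rabs (g (gam b) - g (gam a)) <= M * L.
Proof.
move=> HM Hg [Hab [HK Hc]] HL.
have L0 : 0 <= L.
  have H2 := HL (fun j => if j is O then a else b) 1%nat erefl erefl.
  have H1 := vnorm_ge0 (vsub (gam b) (gam a)).
  have H3 : forall j, (j < 1)%nat -> (fun j => if j is O then a else b) j <= (fun j => if j is O then a else b) j.+1.
    by case=> //= _; lra.
  have := H2 H3; rewrite /=; lra.
suff He : forall e, 0 < e -> Rabs (g (gam b) - g (gam a)) <= (M + e) * L.
  case: (Req_dec L 0) => HL0.
  - have := He 1 Rlt_0_1; rewrite HL0; lra.
  - apply: Rnot_lt_le => Hlt.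
    set X := Rabs _ in Hlt He.
    have Lp : 0 < L by lra.
    have := He ((X - M * L) / (2 * L)) ltac:(apply: Rdiv_lt_0_compat; lra).
    have -> : (M + (X - M * L) / (2 * L)) * L = (X + M * L) / 2 by field; lra.
    lra.
move=> e He.
have Hloc : forall s, a <= s <= b -> exists del, 0 < del /\ forall u, a <= u <= b -> Rabs (u - s) < del ->
   Rabs (g (gam u) - g (gam s)) <= (M + e) * vnorm (vsub (gam u) (gam s)) /\
   Rabs (g (gam s) - g (gam u)) <= (M + e) * vnorm (vsub (gam s) (gam u)).
  move=> s Hs.
  have [d1 [Hd1 H1]] := Hg (gam s) (HK s Hs) e He.
  have [d2 [Hd2 H2]] := Hc s Hs d1 Hd1.
  exists d2; split=> // u Hu Hus.
  have H := H1 (gam u) (HK u Hu) (H2 u Hu Hus).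
  split=> //; rewrite Rabs_minus_sym vnorm_sym; exact: H.
pose E s := a <= s <= b /\ forall u, a <= u <= s -> PP g M gam a e u.
have PPa : PP g M gam a e a.
  exists (fun _ => a), 0%nat; do 3 split=> //=.
  rewrite Rminus_diag Rabs_R0; lra.
have Ea : E a.
  split; first lra.
  move=> u Hu; have -> : u = a by lra. exact: PPa.
have Eb : bound E by exists b => s [Hs _]; lra.
have [sig [Hub Hlub]] := @completeness E Eb (ex_intro _ a Ea).
have Hsa : a <= sig by apply: Hub.
have Hsb : sig <= b by apply: Hlub => s [Hs _]; lra.
have Hbelow : forall u, a <= u < sig -> PP g M gam a e u.
  move=> u Hu.
  case: (classic (exists s, E s /\ u < s)) => [[s [[_ Hs] Hus]]|Hn].
  - apply: Hs; lra.
  - exfalso; have : sig <= u.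
      apply: Hlub => s Es; apply: Rnot_lt_le => Hsu; apply: Hn; by exists s.
    lra.
have [del [Hdel Hd]] := Hloc sig (conj Hsa Hsb).
have Psig : PP g M gam a e sig.
  case: (Req_dec sig a) => Hsa'; first by rewrite Hsa'.
  set u := Rmax a (sig - del / 2).
  have Hu1 : a <= u by apply: Rmax_l.
  have Hu2 : u < sig by rewrite /u; apply: Rmax_lub_lt; lra.
  have Hu3 : sig - del / 2 <= u by apply: Rmax_r.
  apply: (PP_ext (Hbelow u (conj Hu1 Hu2))); first lra.
  have := Hd u ltac:(lra) ltac:(rewrite Rabs_left; lra); case=> _ H; exact: H.
have Esig : E sig.
  split; first lra.
  move=> u Hu; case: (Req_dec u sig) => [->|Hne] //; apply: Hbelow; lra.
have Hsb' : sig = b.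
  apply: Rle_antisym => //; apply: Rnot_lt_le => Hlt.
  set v := Rmin b (sig + del / 2).
  have Hv1 : v <= b by apply: Rmin_l.
  have Hv2 : sig < v by rewrite /v; apply: Rmin_glb_lt; lra.
  have Hv3 : v <= sig + del / 2 by apply: Rmin_r.
  have Ev : E v.
    split; first lra.
    move=> u Hu; case: (Rle_lt_dec u sig) => Hus.
    + case: Esig => _ H; apply: H; lra.
    + apply: (PP_ext Psig); first lra.
      have := Hd u ltac:(lra) ltac:(rewrite Rabs_right; lra); case=> H _; exact: H.
  have := Hub v Ev; lra.
have [t [k [H0 [Hk [Hm Hbnd]]]]] : PP g M gam a e b by rewrite -Hsb'.
have := HL t k H0 Hk Hm.
move=> Hp; apply: Rle_trans Hbnd _; apply: Rmult_le_compat_l => //; lra.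
Qed.

End Aux3.

Module Aux4.
Import ssreflect ssrfun ssrbool eqtype ssrnat seq fintype bigop.
Import Aux Aux2 Aux3.
Local Open Scope R_scope.
Set Implicit Arguments.
Unset Strict Implicit.

Lemma quot_bound Q n e : 0 < n -> Rabs (Q / n) < e -> Rabs Q <= e * n.
Proof.
move=> Hn H; rewrite Rabs_mult Rabs_inv (Rabs_pos_eq n) in H; last lra.
have -> : Rabs Q = Rabs Q * / n * n by field; lra.
apply: Rmult_le_compat_r; lra.
Qed.

Lemma quot_lt Q n e : 0 < n -> Rabs Q < e * n -> Rabs (Q / n) < e.
Proof.
move=> Hn H; rewrite Rabs_mult Rabs_inv (Rabs_pos_eq n); last lra.
apply: (Rmult_lt_reg_r n) => //.
have -> : Rabs Q * / n * n = Rabs Q by field; lra.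
lra.
Qed.

Lemma diff_cont d (K : Vec d -> Prop) f1 f2 : cont_on K f1 -> cont_on K f2 ->
  cont_on K (fun x => Rabs (f1 x - f2 x)).
Proof.
move=> H1 H2 x Kx e He.
have [d1 [Hd1 G1]] := H1 x Kx (e/2) ltac:(lra).
have [d2 [Hd2 G2]] := H2 x Kx (e/2) ltac:(lra).
exists (Rmin d1 d2); split; first by apply: Rmin_glb_lt.
move=> y Ky Hy.
have := G1 y Ky (Rlt_le_trans _ _ _ Hy (Rmin_l _ _)).
have := G2 y Ky (Rlt_le_trans _ _ _ Hy (Rmin_r _ _)).
move: (f1 y) (f1 x) (f2 y) (f2 x) => a b c d'.
split_Rabs; lra.
Qed.

Lemma vdiff_cont d (K : Vec d -> Prop) g1 g2 : vcont_on K g1 -> vcont_on K g2 ->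
  cont_on K (fun x => vnorm (vsub (g1 x) (g2 x))).
Proof.
move=> H1 H2 x Kx e He.
have [d1 [Hd1 G1]] := H1 x Kx (e/2) ltac:(lra).
have [d2 [Hd2 G2]] := H2 x Kx (e/2) ltac:(lra).
exists (Rmin d1 d2); split; first by apply: Rmin_glb_lt.
move=> y Ky Hy.
have := G1 y Ky (Rlt_le_trans _ _ _ Hy (Rmin_l _ _)).
have := G2 y Ky (Rlt_le_trans _ _ _ Hy (Rmin_r _ _)).
have T1 := vnorm_tri (g1 y) (g1 x) (g2 y).
have T2 := vnorm_tri (g1 x) (g2 x) (g2 y).
have T3 := vnorm_tri (g1 x) (g1 y) (g2 x).
have T4 := vnorm_tri (g1 y) (g2 y) (g2 x).
rewrite (vnorm_sym (g2 x) (g2 y)) in T2.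
rewrite (vnorm_sym (g1 x) (g1 y)) in T3.
move=> A B; split_Rabs; lra.
Qed.

Lemma pointwise d (K : Vec d -> Prop) F1 dF1 F2 dF2 e :
  compact_set K -> in_J1 K F1 dF1 -> in_J1 K F2 dF2 -> J1dist K F1 dF1 F2 dF2 < e ->
  forall x, K x -> Rabs (F1 x - F2 x) < e /\ vnorm (vsub (dF1 x) (dF2 x)) < e.
Proof.
move=> HK [c1 [v1 _]] [c2 [v2 _]]; rewrite /J1dist /J1norm => H x Kx.
have [B1 HB1] := cont_bounded HK (diff_cont c1 c2).
have [B2 HB2] := cont_bounded HK (vdiff_cont v1 v2).
have S1 := @supK_ge _ K (fun x => Rabs (F1 x - F2 x)) x
  (ex_intro _ B1 (fun y Ky => Rle_trans _ _ _ (Rle_abs _) (HB1 y Ky))) Kx.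
have S2 := @supK_ge _ K (fun x => vnorm (vsub (dF1 x) (dF2 x))) x
  (ex_intro _ B2 (fun y Ky => Rle_trans _ _ _ (Rle_abs _) (HB2 y Ky))) Kx.
have P1 := @supK_ge0 _ K (fun x => Rabs (F1 x - F2 x)) (fun y _ => Rabs_pos _).
have P2 := @supK_ge0 _ K (fun x => vnorm (vsub (dF1 x) (dF2 x))) (fun y _ => vnorm_ge0 _).
simpl in *; split; lra.
Qed.

Lemma J1_lip d (K : Vec d -> Prop) F1 dF1 F2 dF2 M :
  in_J1 K F1 dF1 -> in_J1 K F2 dF2 ->
  (forall z, K z -> vnorm (vsub (dF1 z) (dF2 z)) <= M) ->
  forall x, K x -> forall e, 0 < e -> exists del, 0 < del /\ forall z, K z ->
     vnorm (vsub z x) < del ->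
     Rabs ((F1 z - F2 z) - (F1 x - F2 x)) <= (M + e) * vnorm (vsub z x).
Proof.
move=> [_ [_ D1]] [_ [_ D2]] HM x Kx e He.
have [d1 [Hd1 G1]] := D1 x Kx (e/2) ltac:(lra).
have [d2 [Hd2 G2]] := D2 x Kx (e/2) ltac:(lra).
exists (Rmin d1 d2); split; first by apply: Rmin_glb_lt.
move=> z Kz Hz.
case: (classic (z = x)) => [->|Hne].
  rewrite vnorm_self; have -> : F1 x - F2 x - (F1 x - F2 x) = 0 by ring.
  rewrite Rabs_R0; lra.
have Hn : 0 < vnorm (vsub z x).
  have := vnorm_ge0 (vsub z x); case=> // H0; exfalso; apply: Hne; exact: vnorm_eq0.
have Q1 := quot_bound Hn (G1 z Kz Hne (Rlt_le_trans _ _ _ Hz (Rmin_l _ _))).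
have Q2 := quot_bound Hn (G2 z Kz Hne (Rlt_le_trans _ _ _ Hz (Rmin_r _ _))).
have CS := cauchy_schwarz (vsub (dF1 x) (dF2 x)) (vsub z x).
rewrite dot_sub_l in CS.
have HMx := HM x Kx.
have Hp : vnorm (vsub (dF1 x) (dF2 x)) * vnorm (vsub z x) <= M * vnorm (vsub z x).
  by apply: Rmult_le_compat_r; [apply: vnorm_ge0 | apply: HMx].
move: CS Q1 Q2 Hp.
move: (dot (dF1 x) (vsub z x)) (dot (dF2 x) (vsub z x)) (vnorm (vsub z x)) (vnorm (vsub (dF1 x) (dF2 x))) => D1x D2x nv nd.
move: (F1 z) (F1 x) (F2 z) (F2 x) => a b c d'.
move=> CS Q1 Q2 Hp.
have E : a - c - (b - d') = (a - b - D1x) - (c - d' - D2x) + (D1x - D2x) by ring.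
rewrite E.
have T1 := Rabs_triang ((a - b - D1x) - (c - d' - D2x)) (D1x - D2x).
have T2 : Rabs ((a - b - D1x) - (c - d' - D2x)) <= Rabs (a - b - D1x) + Rabs (c - d' - D2x).
  by split_Rabs; lra.
have -> : (M + e) * nv = M * nv + e / 2 * nv + e / 2 * nv by field.
lra.
Qed.

Definition limseq (u : nat -> R) : R :=
  match excluded_middle_informative (Cauchy_crit u) with
  | left H => proj1_sig (R_complete u H)
  | right _ => 0
  end.

Lemma limseq_cv u : Cauchy_crit u -> Un_cv u (limseq u).
Proof.
move=> H; rewrite /limseq; case: excluded_middle_informative => [H'|//].
by case: (R_complete u H').
Qed.

End Aux4.

Module Aux5.
Import ssreflect ssrfun ssrbool eqtype ssrnat seq fintype bigop.
Import Aux Aux2 Aux3 Aux4.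
Local Open Scope R_scope.
Set Implicit Arguments.
Unset Strict Implicit.

Lemma main d (K : Vec d -> Prop) :
  compact_set K -> pw_whitney_regular K ->
  forall (F : nat -> Vec d -> R) (dF : nat -> Vec d -> Vec d),
    (forall n, in_J1 K (F n) (dF n)) ->
    (forall eps, 0 < eps -> exists N, forall m n, (N <= m)%coq_nat -> (N <= n)%coq_nat ->
        J1dist K (F m) (dF m) (F n) (dF n) < eps) ->
    exists (f : Vec d -> R) (df : Vec d -> Vec d),
      in_J1 K f df /\
      (forall eps, 0 < eps -> exists N, forall n, (N <= n)%coq_nat ->
          J1dist K (F n) (dF n) f df < eps).
Proof.
move=> HK HW F dF HJ HC.
have Hpw : forall e, 0 < e -> exists N, forall m n, (N <= m)%coq_nat -> (N <= n)%coq_nat ->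
    forall x, K x -> Rabs (F m x - F n x) < e /\ vnorm (vsub (dF m x) (dF n x)) < e.
  move=> e He; have [N HN] := HC e He; exists N => m n Hm Hn x Kx.
  exact: pointwise HK (HJ m) (HJ n) (HN m n Hm Hn) x Kx.
pose f x := limseq (fun n => F n x).
pose df x := fun i => limseq (fun n => dF n x i).
have Hf : forall x, K x -> Un_cv (fun n => F n x) (f x).
  move=> x Kx; apply: limseq_cv => e He.
  have [N HN] := Hpw e He; exists N => n m Hn Hm.
  rewrite /Rdist; exact: (proj1 (HN n m Hn Hm x Kx)).
have Hdf : forall x, K x -> forall i, Un_cv (fun n => dF n x i) (df x i).
  move=> x Kx i; apply: limseq_cv => e He.
  have [N HN] := Hpw e He; exists N => n m Hn Hm.
  rewrite /Rdist; apply: Rle_lt_trans (proj2 (HN n m Hn Hm x Kx)).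
  exact: (comp_le (vsub (dF n x) (dF m x)) i).
have Hunif : forall e, 0 < e -> exists N, forall n, (N <= n)%coq_nat -> forall x, K x ->
    Rabs (F n x - f x) <= e /\ vnorm (vsub (dF n x) (df x)) <= e.
  move=> e He; have [N HN] := Hpw e He; exists N => n Hn x Kx; split.
  - apply: (@lim_le (fun m => F n x - F m x) _ N) => [|m Hm].
    + apply: CV_minus => //; [apply: cv_const | exact: Hf].
    + exact: Rlt_le (proj1 (HN n m Hn Hm x Kx)).
  - apply: (@vlim_le _ (fun m => dF m x) _ _ N) => [i|m Hm].
    + exact: Hdf.
    + exact: Rlt_le (proj2 (HN n m Hn Hm x Kx)).
have Hfc : cont_on K f.
  move=> x Kx e He.
  have [N HN] := Hunif (e/3) ltac:(lra).
  have [_ [_ [c _]]] := (HJ N, HJ N).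
  have [del [Hdel G]] := (proj1 (HJ N)) x Kx (e/3) ltac:(lra).
  exists del; split=> // y Ky Hy.
  have := G y Ky Hy; have := proj1 (HN N (Nat.le_refl _) x Kx); have := proj1 (HN N (Nat.le_refl _) y Ky).
  move: (F N y) (F N x) (f y) (f x) => a b c' d'.
  split_Rabs; lra.
have Hdfc : vcont_on K df.
  move=> x Kx e He.
  have [N HN] := Hunif (e/3) ltac:(lra).
  have [del [Hdel G]] := (proj1 (proj2 (HJ N))) x Kx (e/3) ltac:(lra).
  exists del; split=> // y Ky Hy.
  have := G y Ky Hy; have := proj2 (HN N (Nat.le_refl _) x Kx); have := proj2 (HN N (Nat.le_refl _) y Ky).
  have T1 := vnorm_tri (df y) (dF N y) (df x).
  have T2 := vnorm_tri (dF N y) (dF N x) (df x).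
  rewrite (vnorm_sym (df y) (dF N y)) in T1.
  lra.
exists f, df; split; last first.
  move=> e He; have [N HN] := Hunif (e/3) ltac:(lra).
  exists N => n Hn; rewrite /J1dist /J1norm.
  have S1 := @supK_le _ K (fun x => Rabs (F n x - f x)) (e/3) ltac:(lra) (fun x Kx => proj1 (HN n Hn x Kx)).
  have S2 := @supK_le _ K (fun x => vnorm (vsub (dF n x) (df x))) (e/3) ltac:(lra) (fun x Kx => proj2 (HN n Hn x Kx)).
  simpl in *; lra.
split=> //; split=> // x Kx e He.
have [V [C [HV [Vx [HC0 Hpath]]]]] := HW x Kx.
have [r [Hr HrV]] := HV x Vx.
set eta := e / (C + 3).
have Heta : 0 < eta by apply: Rdiv_lt_0_compat; lra.
have [N1 HN1] := Hpw eta Heta.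
have [N2 HN2] := Hunif eta Heta.
set n := Nat.max N1 N2.
have Hn1 : (N1 <= n)%coq_nat by apply: Nat.le_max_l.
have Hn2 : (N2 <= n)%coq_nat by apply: Nat.le_max_r.
have Hdiff : forall y, K y -> vnorm (vsub y x) < r ->
    Rabs ((f y - F n y) - (f x - F n x)) <= eta * (C * vnorm (vsub x y)).
  move=> y Ky Hy.
  have [gam [a [b [Hp [Ha [Hb HL]]]]]] := Hpath y (HrV y Hy) Ky.
  apply: (@lim_le (fun m => (F m y - F n y) - (F m x - F n x)) _ N1) => [|m Hm].
  - apply: CV_minus; apply: CV_minus => //; (apply: cv_const || exact: Hf).
  - have Hlip := @J1_lip _ K (F m) (dF m) (F n) (dF n) eta (HJ m) (HJ n)
      (fun z Kz => Rlt_le _ _ (proj2 (HN1 m n Hm Hn1 z Kz))).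
    have := @mvi _ K (fun z => F m z - F n z) eta gam a b _ (Rlt_le _ _ Heta) Hlip Hp HL.
    by rewrite Ha Hb.
have [del [Hdel Gn]] := (proj2 (proj2 (HJ n))) x Kx eta Heta.
exists (Rmin r del); split; first by apply: Rmin_glb_lt.
move=> y Ky Hne Hy.
have Hyr : vnorm (vsub y x) < r := Rlt_le_trans _ _ _ Hy (Rmin_l _ _).
have Hyd : vnorm (vsub y x) < del := Rlt_le_trans _ _ _ Hy (Rmin_r _ _).
have Hnv : 0 < vnorm (vsub y x).
  have := vnorm_ge0 (vsub y x); case=> // H0; exfalso; apply: Hne; exact: vnorm_eq0.
apply: quot_lt => //.
have A := Hdiff y Ky Hyr; rewrite (vnorm_sym x y) in A.
have B := quot_bound Hnv (Gn y Ky Hne Hyd).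
have CS := cauchy_schwarz (vsub (dF n x) (df x)) (vsub y x).
rewrite dot_sub_l in CS.
have Hd := proj2 (HN2 n Hn2 x Kx).
have Hp : vnorm (vsub (dF n x) (df x)) * vnorm (vsub y x) <= eta * vnorm (vsub y x).
  by apply: Rmult_le_compat_r; [apply: vnorm_ge0 | apply: Hd].
have Hsum : eta * (C * vnorm (vsub y x)) + eta * vnorm (vsub y x) + eta * vnorm (vsub y x) < e * vnorm (vsub y x).
  have -> : eta * (C * vnorm (vsub y x)) + eta * vnorm (vsub y x) + eta * vnorm (vsub y x) = (eta * (C + 2)) * vnorm (vsub y x) by ring.
  apply: Rmult_lt_compat_r => //.
  rewrite /eta; apply: (Rmult_lt_reg_r (C + 3)); first lra.
  have -> : e / (C + 3) * (C + 2) * (C + 3) = e * (C + 2) by field; lra.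
  nra.
move: A B CS Hp Hsum.
move: (dot (dF n x) (vsub y x)) (dot (df x) (vsub y x)) (vnorm (vsub y x)) (vnorm (vsub (dF n x) (df x))) => D1 D2 nv nd.
move: (f y) (f x) (F n y) (F n x) (eta * (C * nv)) (eta * nv) (e * nv) => fy fx Fy Fx X Y Z.
move=> A B CS Hp Hs.
split_Rabs; lra.
Qed.

End Aux5.

Theorem mainTheorem6 (d : nat) (K : Vec d -> Prop) :
  compact_set K -> pw_whitney_regular K ->
  forall (F : nat -> Vec d -> R) (dF : nat -> Vec d -> Vec d),
    (forall n, in_J1 K (F n) (dF n)) ->
    (forall eps, 0 < eps -> exists N, forall m n, (N <= m)%nat -> (N <= n)%nat ->
        J1dist K (F m) (dF m) (F n) (dF n) < eps) ->
    exists (f : Vec d -> R) (df : Vec d -> Vec d),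
      in_J1 K f df /\
      (forall eps, 0 < eps -> exists N, forall n, (N <= n)%nat ->
          J1dist K (F n) (dF n) f df < eps).
Proof.
  exact (@Aux5.main d K).
Qed.
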